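(* Let $n\ge2$, $q\in\mathbb C$ a primitive $n$-th root of unity, and $u_q(sl_2)$ the $\mathbb C$-algebra with generators $K,E,F$ and relations $K^n=1$, $E^n=F^n=0$, $EK=qKE$, $FK=q^{-1}KF$, $EF-FE=\frac{K-K^{-1}}{q-q^{-1}}$, with basis $\{K^iF^jE^k:0\le i,j,k\le n-1\}$. Let $u\in u_q(sl_2)_0$ be invertible and write $u=u_K+\cdots$, where $u_K$ lies in the Cartan subalgebra spanned by $1,K,\dots,K^{n-1}$ and $\cdots$ denotes a linear combination of basis monomials $K^iF^jE^j$ with $j\ge1$. Then $u_K$ is invertible and $u^{-1}=u_K^{-1}+\cdots$, where again $\cdots$ denotes a linear combination of basis monomials $K^iF^jE^j$ with $j\ge1$.
   Context: $u_q(sl_2)_0$ denotes the degree-zero part of the $\mathbb Z/n\mathbb Z$-grading in which $K^iF^jE^k$ has degree $j-k$ mod $n$, i.e. the span of the monomials $K^iF^jE^j$, $0\le i,j\le n-1$. *)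

(* Defs.v *)
From HB Require Import structures.
From mathcomp Require Import all_boot all_order all_algebra.
From mathcomp Require Import complex.
From mathcomp Require Import reals.
Set Implicit Arguments. Unset Strict Implicit. Unset Printing Implicit Defensive.
Import Order.TTheory GRing.Theory Num.Theory.
Local Open Scope ring_scope.

Definition uq_mono (C : comNzRingType) (A : algType C) (K E F : A) (i j k : nat) : A :=
  K ^+ i * F ^+ j * E ^+ k.

(* (A, K, E, F) is a presentation of the small quantum group u_q(sl_2) over C:
   K^n = 1, E^n = F^n = 0, EK = qKE, FK = q^{-1}KF,
   EF - FE = (K - K^{-1})/(q - q^{-1})   (K^{-1} = K^(n-1) since K^n = 1),
   and {K^i F^j E^k : 0 <= i,j,k <= n-1} is a basis of A
   (every element has a unique expansion in these monomials). *)
Definition is_uq_sl2 (C : fieldType) (n : nat) (q : C) (A : algType C) (K E F : A) : Prop :=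
  K ^+ n = 1 /\ E ^+ n = 0 /\ F ^+ n = 0 /\
  E * K = q *: (K * E) /\ F * K = q^-1 *: (K * F) /\
  E * F - F * E = (q - q^-1)^-1 *: (K - K ^+ n.-1) /\
  (forall x : A, exists! c : 'I_n -> 'I_n -> 'I_n -> C,
        x = \sum_(i < n) \sum_(j < n) \sum_(k < n) c i j k *: uq_mono K E F i j k).

Definition is_inverse (A : nzRingType) (x y : A) : Prop := x * y = 1 /\ y * x = 1.

(* Main.v *)
Require Import Defs.
From HB Require Import structures.
From mathcomp Require Import all_boot all_order all_algebra.
From mathcomp Require Import complex.
From mathcomp Require Import reals.
Set Implicit Arguments. Unset Strict Implicit. Unset Printing Implicit Defensive.
Import Order.TTheory GRing.Theory Num.Theory.
Local Open Scope ring_scope.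
Local Open Scope complex_scope.

Section U.
Variables (C : fieldType) (n : nat) (q : C) (A : algType C) (K E F : A).
Hypothesis hn : (2 <= n)%N.
Hypothesis hq : n.-primitive_root q.
Hypothesis H : is_uq_sl2 n q K E F.

Local Notation m := (uq_mono K E F).
Definition S (c : 'I_n -> 'I_n -> 'I_n -> C) : A :=
  \sum_(i < n) \sum_(j < n) \sum_(k < n) c i j k *: m i j k.
Definition inS (P : 'I_n -> 'I_n -> 'I_n -> bool) (x : A) :=
  exists c, (forall i j k, ~~ P i j k -> c i j k = 0) /\ x = S c.

Lemma Kn : K ^+ n = 1. Proof. by case: H. Qed.
Lemma En : E ^+ n = 0. Proof. by case: H => _ []. Qed.
Lemma Fn : F ^+ n = 0. Proof. by case: H => _ [_ []]. Qed.
Lemma EK : E * K = q *: (K * E). Proof. by case: H => _ [_ [_ []]]. Qed.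
Lemma FK : F * K = q^-1 *: (K * F). Proof. by case: H => _ [_ [_ [_ []]]]. Qed.
Lemma basis x : exists! c, x = S c. Proof. by case: H => _ [_ [_ [_ [_ [_ ]]]]]. Qed.

Lemma n0 : (0 < n)%N. Proof. exact: ltn_trans hn. Qed.
Definition o0 : 'I_n := Ordinal n0.

Lemma q0 : q != 0.
Proof.
apply/eqP => e; have := prim_expr_order hq; rewrite e expr0n.
by rewrite eqn0Ngt n0 /= => /esym/eqP; rewrite oner_eq0.
Qed.

Lemma S_lin a c1 c2 : S (fun i j k => a * c1 i j k + c2 i j k) = a *: S c1 + S c2.
Proof.
rewrite /S scaler_sumr -big_split; apply eq_bigr => i _.
rewrite scaler_sumr -big_split; apply eq_bigr => j _.
rewrite scaler_sumr -big_split; apply eq_bigr => k _ /=.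
by rewrite scalerDl scalerA.
Qed.

Lemma S0 c : (forall i j k, c i j k = 0) -> S c = 0.
Proof.
move=> h; rewrite /S big1 // => i _; rewrite big1 // => j _; rewrite big1 // => k _.
by rewrite h scale0r.
Qed.

Lemma inS0 P : inS P 0.
Proof. by exists (fun _ _ _ => 0); split => //; rewrite S0. Qed.

Lemma inSlin P a x y : inS P x -> inS P y -> inS P (a *: x + y).
Proof.
case=> c1 [h1 ->] [c2 [h2 ->]]; exists (fun i j k => a * c1 i j k + c2 i j k).
split; last by rewrite S_lin.
by move=> i j k hP; rewrite h1 // h2 // mulr0 addr0.
Qed.

Lemma inSD P x y : inS P x -> inS P y -> inS P (x + y).
Proof. by move=> hx hy; rewrite -[x]scale1r; apply: inSlin. Qed.
Lemma inSZ P a x : inS P x -> inS P (a *: x).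
Proof. by move=> hx; rewrite -[_ *: _]addr0; apply: inSlin => //; apply: inS0. Qed.
Lemma inSN P x : inS P x -> inS P (- x).
Proof. by move=> hx; rewrite -scaleN1r; apply: inSZ. Qed.

Lemma inS_sum P (I : Type) (r : seq I) (Q : pred I) (f : I -> A) :
  (forall i, Q i -> inS P (f i)) -> inS P (\sum_(i <- r | Q i) f i).
Proof. by move=> h; apply: big_ind => //; [apply: inS0 | apply: inSD]. Qed.

Lemma inS_mono (P : _ -> _ -> _ -> bool) i j k : P i j k -> inS P (m i j k).
Proof.
move=> hP; exists (fun i' j' k' => if (i' == i) && (j' == j) && (k' == k) then 1 else 0).
split.
  move=> i' j' k'; case: ifP => // /andP [/andP [/eqP -> /eqP ->] /eqP ->].
  by rewrite hP.
rewrite /S (bigD1 i) //= [X in _ + X]big1 ?addr0; last first.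
  move=> i' /negbTE hi; apply: big1 => j' _; apply: big1 => k' _.
  by rewrite hi scale0r.
rewrite (bigD1 j) //= [X in _ + X]big1 ?addr0; last first.
  move=> j' /negbTE hj; apply: big1 => k' _.
  by rewrite hj andbF scale0r.
rewrite (bigD1 k) //= [X in _ + X]big1 ?addr0; last first.
  by move=> k' /negbTE hk; rewrite hk andbF scale0r.
by rewrite !eqxx scale1r.
Qed.

Lemma S_inj c1 c2 : S c1 = S c2 -> forall i j k, c1 i j k = c2 i j k.
Proof.
move=> e i j k; have [c0 [_ U]] := basis (S c1).
by rewrite -(U c1 erefl) -(U c2 e).
Qed.

Lemma inS_uniq P x c : inS P x -> x = S c -> forall i j k, ~~ P i j k -> c i j k = 0.
Proof.
case=> c' [hc' ->] e i j k hP; by rewrite -(S_inj e) hc'.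
Qed.

Lemma inS_and (P Q : _ -> _ -> _ -> bool) x : inS P x -> inS Q x -> inS (fun i j k => P i j k && Q i j k) x.
Proof.
move=> hP hQ; case: (hP) => c [hc e]; exists c; split => // i j k.
rewrite negb_and => /orP [] h; first by rewrite hc.
exact: (inS_uniq hQ e).
Qed.

Lemma inS_false x : inS (fun _ _ _ => false) x -> x = 0.
Proof. by case=> c [hc ->]; apply: S0 => i j k; rewrite hc. Qed.

Lemma inS_weak (P Q : _ -> _ -> _ -> bool) x : (forall i j k, P i j k -> Q i j k) -> inS P x -> inS Q x.
Proof.
move=> hPQ [c [hc e]]; exists c; split => // i j k hQ; apply: hc.
by apply/negP => /hPQ; apply/negP.
Qed.

Lemma expand x : exists c, x = S c.
Proof. by have [c [e _]] := basis x; exists c. Qed.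

Lemma KF : K * F = q *: (F * K).
Proof. by rewrite FK scalerA mulfV ?q0 // scale1r. Qed.

Lemma KiF i : K ^+ i * F = q ^+ i *: (F * K ^+ i).
Proof.
elim: i => [|i IH]; first by rewrite !expr0 mul1r mulr1 scale1r.
rewrite [in LHS]exprS -[LHS]mulrA IH -scalerAr [in LHS]mulrA KF -scalerAl scalerA.
by rewrite -mulrA -exprS ?exprSr.
Qed.

Lemma FKi i : F * K ^+ i = q^-1 ^+ i *: (K ^+ i * F).
Proof.
elim: i => [|i IH]; first by rewrite !expr0 mul1r mulr1 scale1r.
rewrite [in LHS]exprSr [LHS]mulrA IH -scalerAl -[in LHS]mulrA FK -scalerAr scalerA.
by rewrite mulrA -!exprSr.
Qed.

Lemma EKi i : E * K ^+ i = q ^+ i *: (K ^+ i * E).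
Proof.
elim: i => [|i IH]; first by rewrite !expr0 mul1r mulr1 scale1r.
rewrite [in LHS]exprSr [LHS]mulrA IH -scalerAl -[in LHS]mulrA EK -scalerAr scalerA.
by rewrite mulrA -!exprSr.
Qed.

Lemma FjK j : F ^+ j * K = q^-1 ^+ j *: (K * F ^+ j).
Proof.
elim: j => [|j IH]; first by rewrite !expr0 mul1r mulr1 scale1r.
rewrite [in LHS]exprS -[LHS]mulrA IH -scalerAr [in LHS]mulrA FK -scalerAl scalerA.
by rewrite -mulrA -exprS ?exprSr.
Qed.

Lemma EjK j : E ^+ j * K = q ^+ j *: (K * E ^+ j).
Proof.
elim: j => [|j IH]; first by rewrite !expr0 mul1r mulr1 scale1r.
rewrite [in LHS]exprS -[LHS]mulrA IH -scalerAr [in LHS]mulrA EK -scalerAl scalerA.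
by rewrite -mulrA -exprS ?exprSr.
Qed.

Lemma monoK i j k : m i j k * K = (q ^+ k * q^-1 ^+ j) *: (K * m i j k).
Proof.
rewrite /uq_mono -mulrA EjK -scalerAr mulrA -(mulrA _ _ K) FjK -scalerAr -scalerAl.
rewrite scalerA !mulrA -exprSr -exprS; congr (_ *: _); rewrite mulrC.
Qed.

Lemma monoE i j k : m i j k * E = K ^+ i * F ^+ j * E ^+ k.+1.
Proof. by rewrite /uq_mono -mulrA -exprSr. Qed.

Lemma Fmono i j k : F * m i j k = q^-1 ^+ i *: (K ^+ i * F ^+ j.+1 * E ^+ k).
Proof. by rewrite /uq_mono !mulrA FKi -!scalerAl -(mulrA (K ^+ i) F) -exprS. Qed.

Lemma inS_mulE x : inS (fun i j k => (0 < k)%N) (x * E).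
Proof.
case: (expand x) => c ->; rewrite /S mulr_suml; apply: inS_sum => i _.
rewrite mulr_suml; apply: inS_sum => j _.
rewrite mulr_suml; apply: inS_sum => k _.
rewrite -scalerAl; apply: inSZ; rewrite monoE.
case: (ltnP k.+1 n) => hk.
  have -> : K ^+ i * F ^+ j * E ^+ k.+1 = m i j (Ordinal hk) by [].
  by apply: inS_mono.
have -> : k.+1 = n by apply/eqP; rewrite eqn_leq hk ltn_ord.
by rewrite En mulr0; apply: inS0.
Qed.

Lemma inS_Fmul x : inS (fun i j k => (0 < j)%N) (F * x).
Proof.
case: (expand x) => c ->; rewrite /S mulr_sumr; apply: inS_sum => i _.
rewrite mulr_sumr; apply: inS_sum => j _.
rewrite mulr_sumr; apply: inS_sum => k _.
rewrite -scalerAr; apply: inSZ; rewrite Fmono; apply: inSZ.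
case: (ltnP j.+1 n) => hj.
  have -> : K ^+ i * F ^+ j.+1 * E ^+ k = m i (Ordinal hj) k by [].
  by apply: inS_mono.
have -> : j.+1 = n by apply/eqP; rewrite eqn_leq hj ltn_ord.
by rewrite Fn mulr0 mul0r; apply: inS0.
Qed.

Lemma inS_KK a b : inS (fun i j k => (j == o0) && (k == o0)) (K ^+ a * K ^+ b).
Proof.
have hm : ((a + b) %% n < n)%N by rewrite ltn_pmod // n0.
have -> : K ^+ a * K ^+ b = m (Ordinal hm) o0 o0.
  rewrite /uq_mono /= !expr0 !mulr1 -exprD {1}(divn_eq (a + b)%N n) exprD.
  by rewrite mulnC exprM Kn expr1n mul1r.
by apply: inS_mono; rewrite !eqxx.
Qed.

Lemma inS_one : inS (fun i j k => (j == o0) && (k == o0)) 1.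
Proof. by rewrite -(mulr1 1) -{1 2}(expr0 K); apply: inS_KK. Qed.

Definition U0 (a : 'I_n -> 'I_n -> C) : A :=
  \sum_(i < n) \sum_(j < n) a i j *: m i j j.
Definition UK (a : 'I_n -> 'I_n -> C) : A :=
  \sum_(i < n) \sum_(j < n | nat_of_ord j == 0%N) a i j *: K ^+ i.
Definition UN (a : 'I_n -> 'I_n -> C) : A :=
  \sum_(i < n) \sum_(j < n | (0 < j)%N) a i j *: m i j j.

Lemma U0_split a : U0 a = UK a + UN a.
Proof.
rewrite /U0 /UK /UN -big_split; apply: eq_bigr => i _.
rewrite (bigID (fun j : 'I_n => nat_of_ord j == 0%N)) /=; congr (_ + _).
  by apply: eq_bigr => j /eqP hj; rewrite /uq_mono hj !expr0 !mulr1.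
by apply: eq_bigl => j; rewrite lt0n.
Qed.

Definition isAE (x : A) := exists z, x = z * E.
Definition isFA (x : A) := exists z, x = F * z.

Lemma isAE_sum (I : Type) (r : seq I) (Q : pred I) (f : I -> A) :
  (forall i, Q i -> isAE (f i)) -> isAE (\sum_(i <- r | Q i) f i).
Proof.
move=> h; apply: big_ind => //; first by exists 0; rewrite mul0r.
by move=> x y [z1 ->] [z2 ->]; exists (z1 + z2); rewrite mulrDl.
Qed.

Lemma isFA_sum (I : Type) (r : seq I) (Q : pred I) (f : I -> A) :
  (forall i, Q i -> isFA (f i)) -> isFA (\sum_(i <- r | Q i) f i).
Proof.
move=> h; apply: big_ind => //; first by exists 0; rewrite mulr0.
by move=> x y [z1 ->] [z2 ->]; exists (z1 + z2); rewrite mulrDr.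
Qed.

Lemma isAE_Z a x : isAE x -> isAE (a *: x).
Proof. by case=> z ->; exists (a *: z); rewrite scalerAl. Qed.
Lemma isFA_Z a x : isFA x -> isFA (a *: x).
Proof. by case=> z ->; exists (a *: z); rewrite scalerAr. Qed.

Lemma isAE_UN a : isAE (UN a).
Proof.
apply: isAE_sum => i _; apply: isAE_sum => j hj; apply: isAE_Z.
exists (K ^+ i * F ^+ j * E ^+ j.-1).
by rewrite /uq_mono -(mulrA _ (E ^+ j.-1)) -exprSr prednK.
Qed.

Lemma isFA_UN a : isFA (UN a).
Proof.
apply: isFA_sum => i _; apply: isFA_sum => j hj; apply: isFA_Z.
exists (q ^+ i *: (K ^+ i * F ^+ j.-1 * E ^+ j)).
by rewrite /uq_mono -scalerAr !mulrA scalerAl scalerAl -KiF -(mulrA (K ^+ i) F) -exprS prednK.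
Qed.

Lemma isAE_D x y : isAE x -> isAE y -> isAE (x + y).
Proof. by case=> z1 -> [z2 ->]; exists (z1 + z2); rewrite mulrDl. Qed.
Lemma isFA_D x y : isFA x -> isFA y -> isFA (x + y).
Proof. by case=> z1 -> [z2 ->]; exists (z1 + z2); rewrite mulrDr. Qed.

Lemma isAE_mull x y : isAE x -> isAE (y * x).
Proof. by case=> z ->; exists (y * z); rewrite mulrA. Qed.
Lemma isFA_mulr x y : isFA x -> isFA (x * y).
Proof. by case=> z ->; exists (z * y); rewrite mulrA. Qed.

Lemma isAE_UK x a : isAE x -> isAE (x * UK a).
Proof.
case=> z ->; rewrite /UK mulr_sumr; apply: isAE_sum => i _.
rewrite mulr_sumr; apply: isAE_sum => j _.
rewrite -scalerAr; apply: isAE_Z.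
exists (q ^+ i *: (z * K ^+ i)).
by rewrite -mulrA EKi -scalerAr -scalerAl mulrA.
Qed.

Lemma isFA_UK x a : isFA x -> isFA (UK a * x).
Proof.
case=> z ->; rewrite /UK mulr_suml; apply: isFA_sum => i _.
rewrite mulr_suml; apply: isFA_sum => j _.
rewrite -scalerAl; apply: isFA_Z.
exists (q ^+ i *: (K ^+ i * z)).
by rewrite mulrA KiF -scalerAl -scalerAr mulrA.
Qed.

Lemma inS_UKUK a b : inS (fun i j k => (j == o0) && (k == o0)) (UK a * UK b).
Proof.
rewrite /UK mulr_suml; apply: inS_sum => i _.
rewrite mulr_suml; apply: inS_sum => j _.
rewrite mulr_sumr; apply: inS_sum => i' _.
rewrite mulr_sumr; apply: inS_sum => j' _.
rewrite -scalerAl -scalerAr; apply: inSZ; apply: inSZ; apply: inS_KK.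
Qed.

Lemma cartan a b : U0 a * U0 b = 1 -> UK a * UK b = 1.
Proof.
rewrite !U0_split => h.
set X := UK a * UN b + UN a * UK b + UN a * UN b.
have eX : UK a * UK b - 1 = - X.
  rewrite -h mulrDl !mulrDr /X.
  by rewrite !opprD !addrA addrN sub0r.
have hAE : isAE X.
  rewrite /X; apply: isAE_D; first apply: isAE_D.
  - exact: isAE_mull (isAE_UN b).
  - exact: isAE_UK (isAE_UN a).
  - exact: isAE_mull (isAE_UN b).
have hFA : isFA X.
  rewrite /X; apply: isFA_D; first apply: isFA_D.
  - exact: isFA_UK (isFA_UN b).
  - exact: isFA_mulr (isFA_UN a).
  - exact: isFA_mulr (isFA_UN a).
have h1 := inSD (inS_UKUK a b) (inSN inS_one).
have h2 : inS (fun i j k => (0 < j)%N && (0 < k)%N) (UK a * UK b - 1).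
  rewrite eX; apply: inSN; apply: inS_and.
    by case: hFA => z ->; apply: inS_Fmul.
  by case: hAE => z ->; apply: inS_mulE.
have h3 := inS_and h1 h2.
have /inS_false /eqP : inS (fun _ _ _ => false) (UK a * UK b - 1).
  apply: inS_weak h3 => i j k /andP [/andP [/eqP -> _]].
  by rewrite ltnn.
by rewrite subr_eq0 => /eqP.
Qed.

Lemma conjK c : K ^+ n.-1 * S c * K = S (fun i j k => (q ^+ k * q^-1 ^+ j) * c i j k).
Proof.
rewrite /S mulr_sumr mulr_suml; apply: eq_bigr => i _.
rewrite mulr_sumr mulr_suml; apply: eq_bigr => j _.
rewrite mulr_sumr mulr_suml; apply: eq_bigr => k _.
rewrite -scalerAr -scalerAl -(mulrA (K ^+ n.-1)) monoK -scalerAr mulrA -exprSr prednK ?n0 // Kn.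
by rewrite mul1r scalerA mulrC.
Qed.

Lemma main_sec (c : 'I_n -> 'I_n -> C) (v : A) :
  is_inverse (U0 c) v ->
  exists w, is_inverse (UK c) w /\ exists d, v = w + UN d.
Proof.
case=> huv hvu.
have hKu : U0 c * K = K * U0 c.
  rewrite /U0 mulr_suml mulr_sumr; apply: eq_bigr => i _.
  rewrite mulr_suml mulr_sumr; apply: eq_bigr => j _.
  rewrite -scalerAl -scalerAr monoK -exprMn mulfV ?q0 // expr1n scale1r //.
have hKv : v * K = K * v.
  by rewrite -[v * K]mulr1 -huv !mulrA -(mulrA v K) -hKu mulrA hvu mul1r.
have hv : K ^+ n.-1 * v * K = v.
  by rewrite -mulrA hKv mulrA -exprSr prednK ?n0 // Kn mul1r.
case: (expand v) => cv ev.
have hcv : forall i j k : 'I_n, j != k -> cv i j k = 0.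
  move=> i j k hjk.
  have := S_inj (etrans (esym (conjK cv)) (etrans (congr1 (fun x => K ^+ n.-1 * x * K) (esym ev)) (etrans hv ev))) i j k.
  move=> /eqP; rewrite -subr_eq0 -{2}[cv i j k]mul1r -mulrBl mulf_eq0 => /orP [|/eqP //].
  rewrite subr_eq0 exprVn => /eqP e.
  have e2 : q ^+ k = q ^+ j.
    by rewrite -[q ^+ k]mulr1 -(mulVf (expf_neq0 j q0)) mulrA e mul1r.
  move: e2 => /eqP; rewrite (eq_prim_root_expr hq) !modn_small ?ltn_ord // => /eqP /val_inj hk.
  by rewrite hk eqxx in hjk.
pose d := fun i j : 'I_n => cv i j j.
have evd : v = U0 d.
  rewrite ev /S /U0; apply: eq_bigr => i _; apply: eq_bigr => j _.
  rewrite (bigD1 j) //= [X in _ + X]big1 ?addr0 // => k hk.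
  by rewrite hcv ?scale0r // eq_sym.
exists (UK d); split; last by exists d; rewrite -U0_split.
split; apply: cartan; by rewrite -evd.
Qed.

End U.

Theorem mainTheorem8 (R : realType) (n : nat) (q : R[i])
  (A : algType R[i]) (K E F : A)
  (c : 'I_n -> 'I_n -> R[i]) (v : A) :
  (2 <= n)%N ->
  n.-primitive_root q ->
  is_uq_sl2 n q K E F ->
  (* u lies in the degree-zero part, u = sum c_ij K^i F^j E^j *)
  let u := \sum_(i < n) \sum_(j < n) c i j *: uq_mono K E F i j j in
  (* u_K = its Cartan component *)
  let uK := \sum_(i < n) \sum_(j < n | nat_of_ord j == 0%N) c i j *: K ^+ i in
  is_inverse u v ->
  exists w : A,
    is_inverse uK w /\
    (exists d : 'I_n -> 'I_n -> R[i],
       v = w + \sum_(i < n) \sum_(j < n | (0 < j)%N) d i j *: uq_mono K E F i j j).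
Proof.
move=> hn hq H u uK huv.
exact: (main_sec hn hq H huv).
Qed.
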